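(* Let $p$ be a non-negative integer. For any integer $m$ and $-\pi<\arg\zeta<\pi$, $$S_{-2p-1,0}(\zeta\mathrm{e}^{-m\pi i})=S_{-2p-1,0}(\zeta)+\frac{(-1)^pK''_+}{2^{2p}(p!)^2}H^{(1)}_0(\zeta)+\frac{(-1)^pK''_-}{2^{2p}(p!)^2}H^{(2)}_0(\zeta),\qquad K''_\pm=-\frac{m\pi^2(m\pm1)}{4}.$$
   Context: $J_0,Y_0$ are Bessel functions of order $0$, $H^{(1)}_0=J_0+iY_0$, $H^{(2)}_0=J_0-iY_0$, $\psi=\Gamma'/\Gamma$, $(a)_k=a(a+1)\cdots(a+k-1)$. Lommel functions: $S_{-1,0}(\zeta)=\frac12\sum_{k\ge0}\frac{(-1)^k(\zeta/2)^{2k}}{(k!)^2}\big\{[\log\frac{\zeta}{2}-\psi(k+1)]^2-\frac12\psi'(k+1)+\frac{\pi^2}{4}\big\}$ and $S_{-2p-1,0}(\zeta)=\sum_{j=0}^{p-1}\frac{(-1)^j\zeta^{-2p+2j}}{2^{2j+2}(-p)_{j+1}(-p)_{j+1}}+\frac{(-1)^pS_{-1,0}(\zeta)}{2^{2p}(p!)^2}$. Right-hand side functions are on the principal branch $-\pi<\arg\zeta<\pi$; $g(\zeta\mathrm{e}^{-m\pi i})$ is the value of the analytic continuation of the principal branch at the point over $\zeta$ with argument $\arg\zeta-m\pi$. *)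

(* Defs.v *)
From Stdlib Require Import Reals.
From Coquelicot Require Import Coquelicot.
Open Scope R_scope.

Definition CSeries (a : nat -> Complex.C) : Complex.C :=
  (Series (fun k => Re (a k)), Series (fun k => Im (a k))).

Definition Cpow (z : Complex.C) (n : nat) : Complex.C := pow_n (K := C_Ring) z n.

Fixpoint harm (k : nat) : R :=
  match k with O => 0 | S n => harm n + / INR (S n) end.

Definition euler_gamma : R := real (Lim_seq (fun n => harm n - ln (INR n))).

(* digamma and trigamma at positive integers:
   psi(k+1) = -gamma + H_k,  psi'(k+1) = sum_{j>=0} 1/(k+1+j)^2 *)
Definition psi_int (k : nat) : R := - euler_gamma + harm k.
Definition psi1_int (k : nat) : R := Series (fun j => / (INR (k + 1 + j)) ^ 2).

Fixpoint poch (a : R) (k : nat) : R :=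
  match k with O => 1 | S n => poch a n * (a + INR n) end.

Fixpoint Csum (f : nat -> Complex.C) (n : nat) : Complex.C :=
  match n with O => RtoC 0 | S n' => Cplus (Csum f n') (f n') end.

(* Functions on the logarithmic covering of C\{0}: a point is described by
   zeta (in C, nonzero) together with a chosen value lam of log(zeta/2).
   The principal branch corresponds to lam = Log(zeta/2) (Im in (-pi,pi)). *)

Definition bterm (zeta : Complex.C) (k : nat) : Complex.C :=
  Cmult (RtoC ((-1) ^ k / (INR (Factorial.fact k)) ^ 2)) (Cpow (Cmult zeta (RtoC (/2))) (2 * k)).

Definition J0 (zeta : Complex.C) : Complex.C := CSeries (bterm zeta).

(* Y_0 (DLMF 10.8.2): (2/pi)[(log(z/2)+gamma) J0(z) + sum_{k>=1} (-1)^(k+1) H_k (z^2/4)^k/(k!)^2]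
   written as (2/pi) sum_k (-1)^k (z/2)^(2k)/(k!)^2 (log(z/2) - psi(k+1)). *)
Definition Y0 (zeta lam : Complex.C) : Complex.C :=
  Cmult (RtoC (2 / PI))
    (CSeries (fun k => Cmult (bterm zeta k) (Cminus lam (RtoC (psi_int k))))).

Definition H1_0 (zeta lam : Complex.C) : Complex.C := Cplus (J0 zeta) (Cmult Ci (Y0 zeta lam)).
Definition H2_0 (zeta lam : Complex.C) : Complex.C := Cminus (J0 zeta) (Cmult Ci (Y0 zeta lam)).

Definition S_m1 (zeta lam : Complex.C) : Complex.C :=
  Cmult (RtoC (/2)) (CSeries (fun k =>
    Cmult (bterm zeta k)
      (Cplus (Cpow (Cminus lam (RtoC (psi_int k))) 2)
             (RtoC (- (1/2) * psi1_int k + PI ^ 2 / 4))))).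

Definition S_odd (p : nat) (zeta lam : Complex.C) : Complex.C :=
  Cplus
    (Csum (fun j =>
       Cmult (RtoC ((-1) ^ j / (2 ^ (2 * j + 2) * poch (- INR p) (S j) * poch (- INR p) (S j))))
             (Cinv (Cpow zeta (2 * p - 2 * j)))) p)
    (Cmult (RtoC ((-1) ^ p / (2 ^ (2 * p) * (INR (Factorial.fact p)) ^ 2))) (S_m1 zeta lam)).

(* Main.v *)
Require Import Defs.
From Stdlib Require Import Reals ZArith Lra Lia.
From Coquelicot Require Import Coquelicot.
Open Scope R_scope.

Lemma Cpow_mod z n : Cmod (Defs.Cpow z n) = Cmod z ^ n.
Proof.
  induction n as [|n IH]; unfold Defs.Cpow in *; simpl.
  - apply Cmod_1.
  - change (Cmod (Cmult z (pow_n (K:=C_Ring) z n)) = Cmod z * Cmod z ^ n).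
    rewrite Cmod_mult, IH; reflexivity.
Qed.

Lemma fact_ge1 k : 1 <= INR (Factorial.fact k).
Proof. apply (le_INR 1). pose proof (Factorial.lt_O_fact k). lia. Qed.

Lemma bterm_bound zeta X B c k : 0 <= c -> Cmod X <= B * c^k ->
  Cmod (Cmult (bterm zeta k) X) <=
  B * (/ INR (Factorial.fact k) * (c * Cmod (Cmult zeta (RtoC (/2))) ^ 2) ^ k).
Proof.
  intros Hc HX. unfold bterm.
  set (w := Cmod (Cmult zeta (RtoC (/2)))).
  rewrite Cmod_mult. rewrite (Cmod_mult (RtoC _)), Cmod_R, Cpow_mod. fold w.
  set (f := INR (Factorial.fact k)).
  assert (Hf : 1 <= f) by apply fact_ge1.
  rewrite Rabs_div by (apply pow_nonzero; lra). rewrite pow_1_abs, <- RPow_abs, Rabs_pos_eq by lra.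
  rewrite Rpow_mult_distr, pow_mult.
  assert (Hw : 0 <= (w^2)^k) by (apply pow_le; apply pow2_ge_0).
  assert (HX0 : 0 <= B * c^k) by (pose proof (Cmod_ge_0 X); lra).
  assert (Hff : 1 / f^2 <= / f).
  { unfold Rdiv. rewrite Rmult_1_l. apply Rinv_le_contravar; nra. }
  assert (Hfp : 0 < 1 / f^2) by (apply Rdiv_lt_0_compat; nra).
  apply Rle_trans with (1 / f^2 * (w^2)^k * (B * c^k)).
  - apply Rmult_le_compat_l; [|exact HX]. nra.
  - replace (B * (/ f * (c ^ k * (w ^ 2) ^ k))) with ((/ f) * (w^2)^k * (B * c^k)) by ring.
    apply Rmult_le_compat_r; [exact HX0|]. apply Rmult_le_compat_r; [exact Hw| exact Hff].
Qed.

Lemma harm_bound k : 0 <= harm k <= INR k.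
Proof.
  induction k as [|k IH]; [simpl; lra|]; cbn [harm].
  assert (INR (S k) = INR k + 1) by apply S_INR.
  assert (H1 : 1 <= INR (S k)) by (apply (le_INR 1); lia).
  assert (0 < / INR (S k) <= 1).
  { split. apply Rinv_0_lt_compat; lra. rewrite <- Rinv_1; apply Rinv_le_contravar; lra. }
  lra.
Qed.

Lemma pow2_ge k : INR k + 1 <= 2 ^ k.
Proof.
  induction k as [|k IH]; [simpl; lra|]. rewrite S_INR; simpl.
  assert (1 <= 2^k) by (apply pow_R1_Rle; lra). lra.
Qed.

Lemma d_bound (lam : C) k :
  Cmod (Cminus lam (RtoC (psi_int k))) <= (Cmod lam + Rabs euler_gamma + 1) * 2 ^ k.
Proof.
  unfold Cminus. eapply Rle_trans; [apply Cmod_triangle|].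
  rewrite Cmod_opp, Cmod_R. unfold psi_int.
  pose proof (harm_bound k). pose proof (pow2_ge k). pose proof (Cmod_ge_0 lam).
  pose proof (Rabs_pos euler_gamma).
  assert (Rabs (- euler_gamma + harm k) <= Rabs euler_gamma + INR k).
  { eapply Rle_trans; [apply Rabs_triang|]. rewrite Rabs_Ropp, (Rabs_pos_eq (harm k)) by lra. lra. }
  assert (1 <= 2^k) by (apply pow_R1_Rle; lra).
  nra.
Qed.

Lemma psum_bound k n : sum_n (fun j => / (INR (k + 1 + j)) ^ 2) n <= 2 - / INR (S n) /\
   0 <= sum_n (fun j => / (INR (k + 1 + j)) ^ 2) n.
Proof.
  induction n as [|n IH].
  - rewrite sum_O. simpl INR. 
    assert (H: 1 <= INR (k+1+0)) by (apply (le_INR 1); lia).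
    split.
    + assert (/ INR (k+1+0) ^2 <= 1).
      { rewrite <- Rinv_1. apply Rinv_le_contravar; nra. }
      lra.
    + apply Rlt_le, Rinv_0_lt_compat; nra.
  - rewrite sum_Sn. destruct IH as [IH1 IH2]. change plus with Rplus.
    assert (H: INR (S n) + 1 <= INR (k+1+S n)).
    { rewrite <- S_INR. apply le_INR. lia. }
    assert (Hn : 1 <= INR (S n)) by (apply (le_INR 1); lia).
    assert (Hp : 0 < / INR (k+1+S n) ^2) by (apply Rinv_0_lt_compat; nra).
    split; [|lra].
    rewrite (S_INR (S n)).
    assert (/ INR (k + 1 + S n) ^ 2 <= / (INR (S n) + 1)^2).
    { apply Rinv_le_contravar; nra. }
    assert (/ INR (S n) - / (INR (S n) + 1) = / (INR (S n) * (INR (S n)+1))) by (field; lra).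
    assert (/ (INR (S n) + 1)^2 <= / (INR (S n) * (INR (S n)+1))).
    { apply Rinv_le_contravar; nra. }
    lra.
Qed.

Lemma psi1_bound k : 0 <= psi1_int k <= 2.
Proof.
  unfold psi1_int, Series.
  assert (H1 := Lim_seq_le_loc (fun _ => 0) (sum_n (fun j => / (INR (k + 1 + j)) ^ 2))).
  assert (H2 := Lim_seq_le_loc (sum_n (fun j => / (INR (k + 1 + j)) ^ 2)) (fun _ => 2)).
  rewrite Lim_seq_const in H1, H2.
  destruct (Lim_seq (sum_n (fun j => / (INR (k + 1 + j)) ^ 2))) as [l| |]; cbn [Rbar_le] in *.
  - split; [apply H1 | apply H2]; exists O; intros n _; cbv beta; pose proof (psum_bound k n);
      pose proof (pos_INR n); 
      assert (0 < / INR (S n)) by (apply Rinv_0_lt_compat; apply lt_0_INR; lia); lra.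
  - exfalso; apply H2; exists O; intros n _; cbv beta; pose proof (psum_bound k n);
      assert (0 < / INR (S n)) by (apply Rinv_0_lt_compat; apply lt_0_INR; lia); lra.
  - exfalso; apply H1; exists O; intros n _; cbv beta; pose proof (psum_bound k n); lra.
Qed.

Lemma ser5 (f x y z v w : nat -> R) p q s t r :
  ex_series x -> ex_series y -> ex_series z -> ex_series v -> ex_series w ->
  (forall k, f k = x k + p * y k + q * z k + s * v k + t * w k) ->
  r = Series x + p * Series y + q * Series z + s * Series v + t * Series w ->
  Series f = r.
Proof.
  intros Hx Hy Hz Hv Hw Hf Hr. subst r.
  apply is_series_unique.
  apply Series_correct in Hx. apply Series_correct in Hy. apply Series_correct in Hz.
  apply Series_correct in Hv. apply Series_correct in Hw.
  apply (is_series_scal_l p) in Hy. apply (is_series_scal_l q) in Hz.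
  apply (is_series_scal_l s) in Hv. apply (is_series_scal_l t) in Hw.
  pose proof (is_series_plus _ _ _ _ (is_series_plus _ _ _ _ (is_series_plus _ _ _ _ (is_series_plus _ _ _ _ Hx Hy) Hz) Hv) Hw) as H.
  eapply is_series_ext; [|exact H]. intros n. rewrite Hf. reflexivity.
Qed.

Definition cex (a : nat -> C) := ex_series (fun k => Re (a k)) /\ ex_series (fun k => Im (a k)).

Lemma CSeries_lin (a b c : nat -> C) (al be : C) :
  cex a -> cex b -> cex c ->
  CSeries (fun k => Cplus (Cplus (a k) (Cmult al (b k))) (Cmult be (c k))) =
  Cplus (Cplus (CSeries a) (Cmult al (CSeries b))) (Cmult be (CSeries c)).
Proof.
  intros [Ha1 Ha2] [Hb1 Hb2] [Hc1 Hc2]. destruct al as [a1 a2], be as [b1 b2].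
  unfold CSeries. apply injective_projections; simpl.
  - apply (ser5 _ (fun k => Re (a k)) (fun k => Re (b k)) (fun k => Im (b k))
                  (fun k => Re (c k)) (fun k => Im (c k)) a1 (-a2) b1 (-b2)); auto.
    + intros k. unfold Re, Im. simpl. ring.
    + ring.
  - apply (ser5 _ (fun k => Im (a k)) (fun k => Im (b k)) (fun k => Re (b k))
                  (fun k => Im (c k)) (fun k => Re (c k)) a1 a2 b1 b2); auto.
    + intros k. unfold Re, Im. simpl. ring.
    + ring.
Qed.

Lemma CSeries_ext (a b : nat -> C) : (forall k, a k = b k) -> CSeries a = CSeries b.
Proof. intros H. unfold CSeries. f_equal; apply Series_ext; intros; rewrite H; reflexivity. Qed.
Lemma ex_C (a : nat -> C) M y :
  (forall k, Cmod (a k) <= M * (/ INR (Factorial.fact k) * y^k)) ->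
  ex_series (fun k => Re (a k)) /\ ex_series (fun k => Im (a k)).
Proof.
  intros H.
  assert (E : ex_series (fun k => M * (/ INR (Factorial.fact k) * y^k))).
  { apply (ex_series_scal_l M (fun k => / INR (Factorial.fact k) * y^k)).
    apply ex_pseries_R. eexists. apply is_exp_Reals. }
  split; (eapply (@ex_series_le R_AbsRing R_CompleteNormedModule); [intros n|exact E]);
    (eapply Rle_trans; [|apply H]); change norm with Rabs.
  - apply re_le_Cmod.
  - pose proof (Rmax_Cmod (a n)). change (Rabs (snd (a n)) <= Cmod (a n)).
    pose proof (Rmax_r (Rabs (fst (a n))) (Rabs (snd (a n)))). lra.
Qed.

Lemma cex_of (a : nat -> C) X B c zeta : 0 <= c ->
  (forall k, a k = Cmult (bterm zeta k) (X k)) -> (forall k, Cmod (X k) <= B * c^k) -> cex a.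
Proof.
  intros Hc Ha HX. apply (ex_C _ B (c * Cmod (Cmult zeta (RtoC (/2))) ^ 2)).
  intros k. rewrite Ha. apply bterm_bound; auto.
Qed.

Theorem lemma3p8 (p : nat) (m : Z) (r theta : R) :
  0 < r -> - PI < theta < PI ->
  let zeta : Complex.C := (r * cos theta, r * sin theta) in
  let lam : Complex.C := (ln r - ln 2, theta) in
  let Kp : R := - (IZR m * PI ^ 2 * (IZR m + 1)) / 4 in
  let Km : R := - (IZR m * PI ^ 2 * (IZR m - 1)) / 4 in
  let c : R := (-1) ^ p / (2 ^ (2 * p) * (INR (Factorial.fact p)) ^ 2) in
  S_odd p zeta (Cminus lam (Cmult (RtoC (IZR m * PI)) Ci)) =
  Cplus (Cplus (S_odd p zeta lam)
               (Cmult (RtoC (c * Kp)) (H1_0 zeta lam)))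
        (Cmult (RtoC (c * Km)) (H2_0 zeta lam)).
Proof.
  intros _ _ zeta lam Kp Km c.
  clearbody zeta lam.
  set (A := Cmod lam + Rabs euler_gamma + 1).
  set (u := bterm zeta).
  set (d := fun k => Cminus lam (RtoC (psi_int k))).
  set (e := fun k => RtoC (- (1/2) * psi1_int k + PI ^ 2 / 4)).
  set (T := fun k => Cmult (u k) (Cplus (Defs.Cpow (d k) 2) (e k))).
  set (UD := fun k => Cmult (u k) (d k)).
  set (mm := IZR m).
  assert (HA : 1 <= A) by (unfold A; pose proof (Cmod_ge_0 lam); pose proof (Rabs_pos euler_gamma); lra).
  assert (cT : cex T).
  { apply (cex_of _ (fun k => Cplus (Defs.Cpow (d k) 2) (e k)) (A^2 + (1 + PI^2/4)) 4 zeta); [lra|reflexivity|].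
    intros k. eapply Rle_trans; [apply Cmod_triangle|]. rewrite Cpow_mod.
    unfold e. rewrite Cmod_R. pose proof (psi1_bound k). pose proof (d_bound lam k).
    fold A in H0. fold (d k) in H0.
    assert (H4 : 4 ^ k = (2^k)^2) by (rewrite <- pow_mult, Nat.mul_comm, pow_mult; simpl; f_equal; ring).
    assert (1 <= 4^k) by (apply pow_R1_Rle; lra).
    assert (Cmod (d k) ^ 2 <= (A * 2^k)^2).
    { pose proof (Cmod_ge_0 (d k)). apply pow_incr. lra. }
    assert (Rabs (- (1 / 2) * psi1_int k + PI ^ 2 / 4) <= 1 + PI^2/4).
    { pose proof (pow2_ge_0 PI). apply Rabs_le. lra. }
    assert ((A * 2^k)^2 = A^2 * 4^k) by (rewrite H4; ring).
    pose proof (pow2_ge_0 PI). nra. }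
  assert (cUD : cex UD).
  { apply (cex_of _ d A 2 zeta); [lra|reflexivity|]. intros k. apply d_bound. }
  assert (cU : cex u).
  { apply (cex_of _ (fun _ => RtoC 1) 1 1 zeta); [lra| |].
    - intros k. rewrite Cmult_1_r. reflexivity.
    - intros k. rewrite Cmod_1, pow1. lra. }
  unfold S_odd, S_m1, H1_0, H2_0, Y0, J0. change (bterm zeta) with u.
  rewrite (CSeries_ext _ (fun k => Cplus (Cplus (T k) (Cmult ((0, - 2 * mm * PI) : C) (UD k)))
              (Cmult (RtoC (- mm^2 * PI^2)) (u k)))).
  2:{ intros k. cbv beta. change (bterm zeta k) with (u k). unfold T, UD, d. destruct (u k) as [u1 u2], lam as [l1 l2].
    unfold Defs.Cpow. simpl. apply injective_projections; simpl; ring. }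
  rewrite CSeries_lin by assumption.
  change (fun k => Cmult (u k) (Cplus (Defs.Cpow (Cminus lam (RtoC (psi_int k))) 2) (RtoC (- (1/2) * psi1_int k + PI ^ 2 / 4)))) with T.
  change (fun k => Cmult (u k) (Cminus lam (RtoC (psi_int k)))) with UD.
  destruct (CSeries T) as [s1 s2], (CSeries UD) as [y1 y2], (CSeries u) as [j1 j2].
  destruct (Csum _ p) as [q1 q2].
  unfold Kp, Km. fold mm.
  assert (PI <> 0) by (pose proof PI_RGT_0; lra).
  unfold c. generalize ((-1) ^ p / (2 ^ (2 * p) * (INR (Factorial.fact p)) ^ 2)) as cc. intros cc.
  apply injective_projections; simpl; field; auto.
Qed.
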